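(* For all positive integers $l$ and $m$, the double subdivided star $T_{l,m}$ admits no perfect state transfer between any pair of distinct vertices.
   Context: A subdivided star $SK_{1,l}$ is obtained by identifying exactly one pendant (end) vertex from each of $l$ copies of the path $P_3$; the identified vertex is the coalescence vertex. The double subdivided star $T_{l,m}$ is obtained from $SK_{1,l}$ and $SK_{1,m}$ by adding one edge joining their two coalescence vertices. For a graph $G$ with adjacency matrix $A$, let $U(t)=\exp(itA)$ for $t\in\mathbb{R}$, and let $\mathbf{e}_a$ be the standard basis vector of vertex $a$. $G$ has perfect state transfer between distinct vertices $a,b$ if there is $\tau\in\mathbb{R}$ and $\gamma\in\mathbb{C}$ with $U(\tau)\mathbf{e}_a=\gamma\mathbf{e}_b$. *)

(* Defs.v *)
From HB Require Import structures.
From mathcomp Require Import all_boot all_order all_algebra.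
From mathcomp Require Import all_classical all_reals all_analysis.
From mathcomp Require Import complex.
Set Implicit Arguments. Unset Strict Implicit. Unset Printing Implicit Defensive.
Import Order.TTheory GRing.Theory Num.Theory numFieldNormedType.Exports.
Local Open Scope ring_scope.

(* Vertices of the double subdivided star T_{l,m}:
   - inl false / inl true : the coalescence vertices of SK_{1,l} / SK_{1,m};
   - inr (inl (j, false)) / inr (inl (j, true)) : middle / end vertex of the
     j-th copy of P_3 in SK_{1,l};
   - inr (inr (j, false)) / inr (inr (j, true)) : same for SK_{1,m}. *)
Definition dss_vertex (l m : nat) : finType :=
  (bool + (('I_l * bool) + ('I_m * bool)))%type.

Definition dss_arc (l m : nat) (x y : dss_vertex l m) : bool :=
  match x, y with
  | inl false, inl true => true
  | inl false, inr (inl (_, false)) => true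
  | inl true, inr (inr (_, false)) => true
  | inr (inl (j, false)), inr (inl (j', true)) => j == j'
  | inr (inr (j, false)), inr (inr (j', true)) => j == j'
  | _, _ => false
  end.

Definition dss_adj (l m : nat) (x y : dss_vertex l m) : bool :=
  dss_arc x y || dss_arc y x.

Definition dss_n (l m : nat) : nat := #|dss_vertex l m|.

Definition dss_adjmx (R : realType) (l m : nat) : 'M[R]_(dss_n l m) :=
  \matrix_(i, j) (dss_adj (enum_val i) (enum_val j))%:R.

(* Matrix exponential exp(i t A) of a real square matrix A, as a complex
   matrix: entrywise, the limit of the partial sums
   sum_{k<n} (i t)^k / k! A^k, computed separately on real and imaginary parts. *)
Definition expitA_partial (R : realType) (N : nat) (A : 'M[R]_N) (t : R) (n : nat)
  : 'M[R[i]]_N :=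
  \sum_(k < n) ((Complex 0 t) ^+ k / (k`!)%:R) *: (map_mx (fun x => Complex x 0) A) ^+ k.

Definition expitA (R : realType) (N : nat) (A : 'M[R]_N) (t : R) : 'M[R[i]]_N :=
  \matrix_(i, j)
    Complex (limn (fun n : nat => complex.Re (expitA_partial A t n i j) : R))
            (limn (fun n : nat => complex.Im (expitA_partial A t n i j) : R)).

(* Perfect state transfer between distinct vertices a, b of the graph with
   adjacency matrix A: U(tau) e_a = gamma e_b for some real tau, complex gamma.
   Column a of U(tau) is U(tau) e_a. *)
Definition PST (R : realType) (N : nat) (A : 'M[R]_N) (a b : 'I_N) : Prop :=
  exists (tau : R) (gamma : R[i]),
    forall c : 'I_N, expitA A tau c a = gamma * (c == b)%:R.

(* Main.v *)
Require Import Defs.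
From HB Require Import structures.
From mathcomp Require Import all_boot all_order all_algebra.
From mathcomp Require Import all_classical all_reals all_analysis.
From mathcomp Require Import complex.
From mathcomp Require Import ring lra polyrcf zify.
Import Order.TTheory GRing.Theory Num.Theory numFieldNormedType.Exports.
Local Open Scope ring_scope.
Local Open Scope complex_scope.
Local Open Scope classical_set_scope.

Section S.
Variable R : realType.
Implicit Types t : R.

Lemma cpow_even t j : (Complex 0 t)^+(j.*2) = Complex ((-1)^+j * t^+(j.*2)) 0.
Proof.
elim: j => [|j IH]; first by rewrite expr0 expr0 mul1r.
rewrite doubleS !exprS -!mulrA.
have -> : Complex 0 t * (Complex 0 t * Complex 0 t ^+ j.*2) = 
   (Complex 0 t * Complex 0 t) * Complex 0 t ^+ j.*2 by rewrite mulrA.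
rewrite IH; simpc; congr Complex; ring.
Qed.

Lemma cpow_odd t j : (Complex 0 t)^+(j.*2.+1) = Complex 0 ((-1)^+j * t^+(j.*2.+1)).
Proof.
rewrite exprS cpow_even; simpc; congr Complex; rewrite [t ^+ _.+1]exprS; ring.
Qed.

Lemma ccoef t k : (Complex 0 t)^+k / (k`!)%:R = Complex (cos_coeff t k) (sin_coeff t k).
Proof.
have -> : (k`!)%:R = ((k`!)%:R : R)%:C by rewrite rmorph_nat.
rewrite -fmorphV.
have [j [->|->]] : exists j, k = j.*2 \/ k = j.*2.+1.
  exists k./2; rewrite -{1 3}(odd_double_half k); case: (odd k); [right|left] => //.
- rewrite cpow_even /cos_coeff /sin_coeff /= odd_double doubleK; simpc; congr Complex; ring.
- rewrite cpow_odd /cos_coeff /sin_coeff /= odd_double /= uphalf_double; simpc; congr Complex; rewrite ?doubleK; ring.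
Qed.

Lemma ReD (x y : R[i]) : complex.Re (x + y) = complex.Re x + complex.Re y. Proof. by case: x => ? ?; case: y => ? ?. Qed.
Lemma ImD (x y : R[i]) : complex.Im (x + y) = complex.Im x + complex.Im y. Proof. by case: x => ? ?; case: y => ? ?. Qed.

Lemma coef_bound (cc : nat -> R) t (a : nat -> R) (M : R) :
  (forall k, `|cc k| <= `|t| ^+ k / (k`!)%:R) -> 0 <= M ->
  (forall k, `|a k| <= M ^+ k) ->
  cvgn (series (fun k => cc k * a k)).
Proof.
move=> hc hM ha; apply: normed_cvg.
apply: (@series_le_cvg _ _ (exp_coeff (`|t| * M))).
- by move=> n; rewrite normr_ge0.
- by move=> n; apply: exp_coeff_ge0; rewrite mulr_ge0.
- move=> n /=; rewrite /exp_coeff /= normrM exprMn mulrAC.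
  apply: ler_pM => //; exact: hc.
- exact: is_cvg_series_exp_coeff.
Qed.

Lemma cos_coeff_bound t k : `|cos_coeff t k| <= `|t| ^+ k / (k`!)%:R.
Proof.
rewrite /cos_coeff /= !normrM normfV !normr_nat !normrX normrN normr1 expr1n mulr1.
by case: odd; [rewrite !mul0r divr_ge0 | rewrite mul1r].
Qed.
Lemma sin_coeff_bound t k : `|sin_coeff t k| <= `|t| ^+ k / (k`!)%:R.
Proof.
rewrite /sin_coeff /= !normrM normfV !normr_nat !normrX normrN normr1 expr1n mulr1.
by case: odd; [rewrite mul1r | rewrite !mul0r divr_ge0].
Qed.

Section Mx.
Variables (N : nat) (A : 'M[R]_N).

Lemma mapX k : (map_mx (fun x => Complex x 0) A) ^+ k = map_mx (real_complex R) (A ^+ k).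
Proof.
elim: k => [|k IH].
  rewrite !expr0; apply/matrixP => i j; rewrite !mxE; by case: (i == j).
by rewrite !exprSr IH -!mulmxE map_mxM.
Qed.

Lemma partial_entry t n i j : expitA_partial A t n i j =
  \sum_(k < n) Complex (cos_coeff t k * (A^+k) i j) (sin_coeff t k * (A^+k) i j).
Proof.
rewrite /expitA_partial summxE; apply: eq_bigr => k _.
by rewrite mxE mapX mxE ccoef; simpc.
Qed.

Lemma Re_partial t n i j : complex.Re (expitA_partial A t n i j) =
  series (fun k => cos_coeff t k * (A^+k) i j) n.
Proof.
rewrite partial_entry /series /= big_mkord.
by rewrite (big_morph _ ReD (erefl (complex.Re (0 : R[i])))).
Qed.

Lemma Im_partial t n i j : complex.Im (expitA_partial A t n i j) =
  series (fun k => sin_coeff t k * (A^+k) i j) n.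
Proof.
rewrite partial_entry /series /= big_mkord.
by rewrite (big_morph _ ImD (erefl (complex.Im (0 : R[i])))).
Qed.

Hypothesis hA : forall i j, `|A i j| <= 1.

Lemma entry_bound k i j : `|(A^+k) i j| <= N%:R ^+ k.
Proof.
elim: k i j => [|k IH] i j.
  rewrite expr0 expr0 mxE; case: (i == j) => /=; rewrite ?normr1 ?normr0 //.
rewrite exprSr mxE.
apply: le_trans (ler_norm_sum _ _ _) _.
apply: (@le_trans _ _ (\sum_(l < N) N%:R^+k)).
  apply: ler_sum => l _; rewrite normrM -[X in _ <= X]mulr1.
  by apply: ler_pM.
by rewrite sumr_const card_ord exprSr mulr_natr ?mul1r.
Qed.

Lemma eig_pow (w : 'I_N -> R) lam :
  (forall c, \sum_j w j * A j c = lam * w c) ->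
  forall k c, \sum_j w j * (A^+k) j c = lam ^+ k * w c.
Proof.
move=> he; elim => [|k IH] c.
  rewrite expr0 mul1r (bigD1 c) //= mxE eqxx mulr1 big1 ?addr0 // => j /negbTE hj.
  by rewrite mxE hj mulr0.
rewrite exprSr.
under eq_bigr do rewrite mxE big_distrr /=.
rewrite exchange_big /=.
under eq_bigr do (under eq_bigr do rewrite mulrA; rewrite -big_distrl /= IH).
under eq_bigr do rewrite -mulrA. rewrite -big_distrr /= he exprSr; ring.
Qed.

Lemma lim_comb (cc : nat -> R) t (w : 'I_N -> R) lam a :
  (forall k, `|cc k| <= `|t| ^+ k / (k`!)%:R) ->
  (forall c, \sum_j w j * A j c = lam * w c) ->
  \sum_j w j * limn (series (fun k => cc k * (A^+k) j a)) =
  w a * limn (series (fun k => cc k * lam^+k)).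
Proof.
move=> hc he.
have cv j : cvgn (series (fun k => cc k * (A^+k) j a)).
  by apply: (@coef_bound _ _ _ N%:R hc) => // k; exact: entry_bound.
have cvl : cvgn (series (fun k => cc k * lam^+k)).
  by apply: (@coef_bound _ _ _ `|lam| hc) => // k; rewrite normrX.
have E : (fun n => \sum_j w j * series (fun k => cc k * (A^+k) j a) n) =
         (fun n => w a * series (fun k => cc k * lam^+k) n).
  apply/funext => n; rewrite /series /=.
  under eq_bigr do rewrite big_distrr /=.
  rewrite exchange_big /= big_distrr /=; apply: eq_bigr => k _.
  under eq_bigr do rewrite mulrCA.
  by rewrite -big_distrr /= (@eig_pow w lam he); ring.
have C1 : \sum_j w j * series (fun k => cc k * (A^+k) j a) n @[n --> \oo] -->
          \sum_j w j * limn (series (fun k => cc k * (A^+k) j a)).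
  apply: cvg_big; first exact: add_continuous.
  by move=> j _; apply: cvgMl_tmp; exact: cv.
rewrite E in C1.
have C2 : w a * series (fun k => cc k * lam ^+ k) n @[n --> \oo] -->
   w a * limn (series (fun k => cc k * lam ^+ k)) by apply: cvgMl_tmp.
by rewrite -(cvg_lim _ C1) // -(cvg_lim _ C2).
Qed.

Lemma cos_coeffM t lam k : cos_coeff t k * lam ^+ k = cos_coeff (t * lam) k.
Proof. by rewrite /cos_coeff /= exprMn; ring. Qed.
Lemma sin_coeffM t lam k : sin_coeff t k * lam ^+ k = sin_coeff (t * lam) k.
Proof. by rewrite /sin_coeff /= exprMn; ring. Qed.

Lemma key_cos (w : 'I_N -> R) lam t a :
  (forall c, \sum_j w j * A j c = lam * w c) ->
  \sum_j w j * complex.Re (expitA A t j a) = w a * cos (t * lam).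
Proof.
move=> he.
have -> : cos (t * lam) = limn (series (fun k => cos_coeff t k * lam ^+ k)).
  have E : (fun k => cos_coeff t k * lam ^+ k) = cos_coeff (t * lam).
    by apply/funext => k; rewrite cos_coeffM.
  by rewrite unlock E.
rewrite -(@lim_comb (cos_coeff t) t w lam a (@cos_coeff_bound t) he); apply: eq_bigr => j _.
rewrite mxE /=.
have E : (fun n => complex.Re (expitA_partial A t n j a)) = series (fun k => cos_coeff t k * (A ^+ k) j a).
  by apply/funext => n; rewrite Re_partial.
by rewrite E.
Qed.

Lemma key_sin (w : 'I_N -> R) lam t a :
  (forall c, \sum_j w j * A j c = lam * w c) ->
  \sum_j w j * complex.Im (expitA A t j a) = w a * sin (t * lam).
Proof.
move=> he.
have -> : sin (t * lam) = limn (series (fun k => sin_coeff t k * lam ^+ k)).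
  have E : (fun k => sin_coeff t k * lam ^+ k) = sin_coeff (t * lam).
    by apply/funext => k; rewrite sin_coeffM.
  by rewrite unlock E.
rewrite -(@lim_comb (sin_coeff t) t w lam a (@sin_coeff_bound t) he); apply: eq_bigr => j _.
rewrite mxE /=.
have E : (fun n => complex.Im (expitA_partial A t n j a)) = series (fun k => sin_coeff t k * (A ^+ k) j a).
  by apply/funext => n; rewrite Im_partial.
by rewrite E.
Qed.

Lemma expitA0_diag a : complex.Re (expitA A 0 a a) = 1.
Proof.
rewrite mxE /=; apply: lim_near_cst => //; near=> m.
rewrite Re_partial -[m]prednK; last by near: m.
rewrite /series /= big_nat_recl // big1 ?addr0.
  by rewrite /cos_coeff /= expr0 !mxE eqxx fact0 expr0z !mulr1 !mul1r invr1.
by move=> i _; rewrite /cos_coeff /= expr0n /= !(mulr0, mul0r).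
Unshelve. all: by end_near.
Qed.

End Mx.

Lemma sum_pair (I : finType) (F : I * bool -> R) :
  \sum_p F p = \sum_i F (i, true) + \sum_i F (i, false).
Proof.
have -> : \sum_p F p = \sum_i \sum_(b : bool) F (i, b).
  by rewrite pair_bigA; apply: eq_bigr => -[].
rewrite -big_split /=; apply: eq_bigr => i _.
by rewrite big_bool.
Qed.

Definition pmu (l m : nat) (mu : R) :=
  mu ^+ 3 - (l + m + 3)%:R * mu ^+ 2 + (l * m + l + m + 3)%:R * mu - 1.

Definition wv {l m : nat} (lam : R) (x : dss_vertex l m) : R :=
  let mu := lam ^+ 2 in
  match x with
  | inl false => lam * (mu - 1) ^+ 2
  | inl true => mu * (mu - 1) * (mu - l%:R - 1)
  | inr (inl (_, false)) => mu * (mu - 1)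
  | inr (inl (_, true)) => lam * (mu - 1)
  | inr (inr (_, false)) => lam * mu * (mu - l%:R - 1)
  | inr (inr (_, true)) => mu * (mu - l%:R - 1)
  end.

Lemma sum_delta n (j : 'I_n) (x : R) : \sum_(i < n) x * (i == j)%:R = x.
Proof.
rewrite (bigD1 j) //= eqxx mulr1 big1 ?addr0 // => i /negbTE ->.
by rewrite mulr0.
Qed.

Lemma sum_delta2 n (j : 'I_n) (x : R) : \sum_(i < n) x * (j == i)%:R = x.
Proof. by under eq_bigr do rewrite eq_sym; exact: sum_delta. Qed.
Lemma sum_delta3 n (j : 'I_n) (x : R) : \sum_(i < n) x * ((i == j) || false)%:R = x.
Proof. by under eq_bigr do rewrite orbF; exact: sum_delta. Qed.

Lemma eigen_v (l m : nat) lam : pmu l m (lam ^+ 2) = 0 ->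
  forall y : dss_vertex l m,
  \sum_(x : dss_vertex l m) wv lam x * (dss_adj x y)%:R = lam * wv lam y.
Proof.
move=> hp y.
rewrite big_sumType big_bool big_sumType !sum_pair /=.
case: y => [[]|[[j []]|[j []]]]; rewrite /dss_adj /= ?orbF.
all: rewrite ?mulr0 ?mulr1 ?big1_eq ?sumr_const ?card_ord ?sum_delta ?sum_delta2 ?sum_delta3 ?addr0 ?add0r.
all: try by ring.
apply/eqP; rewrite -subr_eq0; apply/eqP.
transitivity (- lam * pmu l m (lam ^+ 2)); last by rewrite hp mulr0.
rewrite /pmu; ring.
Qed.

Lemma sin_intpi (k : int) : sin (k%:~R * pi) = 0 :> R.
Proof.
have hn (n : nat) : sin (n%:R * pi) = 0 :> R.
  by rewrite mulr_natl -[_ *+ n]add0r (alternatingn (@sinDpi R)) sin0 mulr0.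
case: k => n; first by rewrite -pmulrn hn.
by rewrite NegzE mulrNz mulNr sinN -pmulrn hn oppr0.
Qed.

Lemma sin_zero (y : R) : sin y = 0 -> exists k : int, y = k%:~R * pi.
Proof.
move=> hy; set k := Num.floor (y / pi); exists k.
have hpi := @pi_gt0 R.
have [h1 h2] : k%:~R <= y / pi /\ y / pi < (k + 1)%:~R.
  by split; [exact: Num.Theory.floor_le | exact: Num.Theory.floorD1_gt].
set r := y - k%:~R * pi.
have r0 : 0 <= r.
  rewrite subr_ge0 -ler_pdivlMr //.
have rpi : r < pi.
  rewrite ltrBlDr -[X in X + _]mul1r -mulrDl -ltr_pdivrMr // addrC.
  by rewrite intrD in h2.
have sr : sin r = 0 by rewrite /r sinB hy mul0r sin_intpi mulr0 subrr.
have : ~ (0 < r).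
  by move=> rp; have := @sin_gt0_pi R r; rewrite rp rpi sr ltxx => /(_ isT).
move=> /negP; rewrite -leNgt => r_le0.
have : r = 0 by apply/eqP; rewrite eq_le r_le0 r0.
by move/eqP; rewrite subr_eq0 => /eqP.
Qed.

Lemma vieta_gen (S T x y z : R) :
  x ^+ 3 - S * x ^+ 2 + T * x - 1 = 0 -> y ^+ 3 - S * y ^+ 2 + T * y - 1 = 0 ->
  z ^+ 3 - S * z ^+ 2 + T * z - 1 = 0 -> x != y -> x != z -> y != z -> x + y + z = S.
Proof.
move=> px py pz xy xz yz.
have hxy : x ^+ 2 + x * y + y ^+ 2 - S * (x + y) + T = 0.
  have : (x - y) * (x ^+ 2 + x * y + y ^+ 2 - S * (x + y) + T) =
     (x ^+ 3 - S * x ^+ 2 + T * x - 1) - (y ^+ 3 - S * y ^+ 2 + T * y - 1) by ring.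
  rewrite px py subrr => /eqP; rewrite mulf_eq0 subr_eq0 (negbTE xy) /= => /eqP //.
have hxz : x ^+ 2 + x * z + z ^+ 2 - S * (x + z) + T = 0.
  have : (x - z) * (x ^+ 2 + x * z + z ^+ 2 - S * (x + z) + T) =
     (x ^+ 3 - S * x ^+ 2 + T * x - 1) - (z ^+ 3 - S * z ^+ 2 + T * z - 1) by ring.
  rewrite px pz subrr => /eqP; rewrite mulf_eq0 subr_eq0 (negbTE xz) /= => /eqP //.
have : (y - z) * (x + y + z - S) =
   (x ^+ 2 + x * y + y ^+ 2 - S * (x + y) + T) - (x ^+ 2 + x * z + z ^+ 2 - S * (x + z) + T) by ring.
rewrite hxy hxz subrr => /eqP; rewrite mulf_eq0 subr_eq0 (negbTE yz) /= subr_eq0 => /eqP //.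
Qed.

Lemma vieta l m x y z : pmu l m x = 0 -> pmu l m y = 0 -> pmu l m z = 0 ->
  x != y -> x != z -> y != z -> x + y + z = (l + m + 3)%:R.
Proof. exact: vieta_gen. Qed.

Lemma pmu_root l m a b : a <= b -> pmu l m a * pmu l m b < 0 ->
  exists x, pmu l m x = 0 /\ a < x < b.
Proof.
move=> ab hab.
pose q : {poly R} := 'X^3 - ((l + m + 3)%:R)%:P * 'X^2 + ((l * m + l + m + 3)%:R)%:P * 'X - 1.
have qE u : q.[u] = pmu l m u by rewrite /q /pmu !hornerE.
have hq : q.[a] * q.[b] < 0 by rewrite !qE.
have [x hx /rootP hr] := poly_ivtoo ab hq.
by exists x; split; [rewrite -qE | move: hx; rewrite in_itv].
Qed.

Lemma roots_exist l m : (0 < l)%N -> (0 < m)%N ->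
  exists x y z, [/\ pmu l m x = 0, pmu l m y = 0 & pmu l m z = 0] /\
     [/\ 0 < x < 1, 1 < y < l.+1%:R & l.+1%:R < z].
Proof.
move=> l0 m0.
have Hl : 0 < l%:R :> R by rewrite ltr0n.
have Hm : 0 < m%:R :> R by rewrite ltr0n.
have p0 : pmu l m 0 = -1 by rewrite /pmu; ring.
have p1 : pmu l m 1 = l%:R * m%:R by rewrite /pmu !natrD !natrM; ring.
have pl : pmu l m l.+1%:R = - l%:R ^+ 2 by rewrite /pmu !natrD !natrM -addn1 natrD; ring.
have pS : pmu l m (l + m + 3)%:R = (l * m + l + m + 3)%:R * (l + m + 3)%:R - 1.
  by rewrite /pmu; ring.
have [x [hx /andP [x0 x1]]] : exists x, pmu l m x = 0 /\ 0 < x < 1.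
  apply: pmu_root => //; rewrite p0 p1 mulN1r oppr_lt0; exact: mulr_gt0.
have [y [hy /andP [y0 y1]]] : exists y, pmu l m y = 0 /\ 1 < y < l.+1%:R.
  apply: pmu_root; first by rewrite ler1n.
  by rewrite p1 pl mulrN oppr_lt0; apply: mulr_gt0; [exact: mulr_gt0 | exact: exprn_gt0].
have [z [hz /andP [z0 z1]]] : exists z, pmu l m z = 0 /\ l.+1%:R < z < (l + m + 3)%:R.
  apply: pmu_root; first by rewrite ler_nat; lia.
  rewrite pl pS mulNr oppr_lt0; apply: mulr_gt0; first exact: exprn_gt0.
  rewrite subr_gt0 -natrM ltr1n; lia.
by exists x, y, z; split; split => //; apply/andP; split.
Qed.

End S.
Arguments pmu {R}.
Arguments wv {R l m}.
Arguments eigen_v {R l m lam}.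

Lemma nat_noroot (P Q S T : nat) : (0 < P)%N -> (P < Q)%N ->
  (P ^ 3 + T * P * Q ^ 2 = S * P ^ 2 * Q + Q ^ 3)%N -> False.
Proof.
move=> P0 PQ E.
have g0 : (0 < gcdn P Q)%N by rewrite gcdn_gt0 P0.
set g := gcdn P Q in g0.
have [P' eP] : exists P', P = (P' * g)%N by exists (P %/ g)%N; rewrite divnK // dvdn_gcdl.
have [Q' eQ] : exists Q', Q = (Q' * g)%N by exists (Q %/ g)%N; rewrite divnK // dvdn_gcdr.
have cop : coprime P' Q'.
  by rewrite /coprime -(eqn_pmul2r g0) mul1n muln_gcdl -eP -eQ; apply/eqP.
have E' : (P' ^ 3 + T * P' * Q' ^ 2 = S * P' ^ 2 * Q' + Q' ^ 3)%N.
  apply/eqP; rewrite -(@eqn_pmul2l (g ^ 3)) ?expn_gt0 ?g0 //; apply/eqP.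
  have -> : (g ^ 3 * (P' ^ 3 + T * P' * Q' ^ 2) = P ^ 3 + T * P * Q ^ 2)%N by rewrite eP eQ; ring.
  have -> : (g ^ 3 * (S * P' ^ 2 * Q' + Q' ^ 3) = S * P ^ 2 * Q + Q ^ 3)%N by rewrite eP eQ; ring.
  exact: E.
have dQ : (Q' %| P' ^ 3)%N.
  have : (Q' %| P' ^ 3 + T * P' * Q' ^ 2)%N.
    by rewrite E' dvdn_add // ?dvdn_mull // dvdn_exp.
  by rewrite dvdn_addl // dvdn_mull // dvdn_exp.
have : (Q' %| 1)%N.
  have := coprimeXl 3 cop; rewrite coprime_sym /coprime => /eqP <-.
  by rewrite dvdn_gcd dvdnn dQ.
rewrite dvdn1 => /eqP Q1.
move: PQ P0; rewrite eP eQ Q1 ltn_pmul2r // ltnS leqn0 => /eqP ->.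
by rewrite mul0n.
Qed.

Lemma sum_enum (R : realType) l m (F : dss_vertex l m -> R) :
  \sum_(j < dss_n l m) F (enum_val j) = \sum_x F x.
Proof.
rewrite /dss_n. by rewrite -(big_enum_val F).
Qed.

Section G.
Variables (R : realType) (l m : nat).
Local Notation N := (dss_n l m).
Local Notation A := (dss_adjmx R l m).

Lemma adj_bound (i j : 'I_N) : `|A i j| <= 1.
Proof. by rewrite mxE; case: dss_adj; rewrite ?normr1 ?normr0. Qed.

Lemma eigen_I (lam : R) : pmu l m (lam ^+ 2) = 0 ->
  forall c : 'I_N, \sum_j wv lam (enum_val j) * A j c = lam * wv lam (enum_val c).
Proof.
move=> hp c; under eq_bigr do rewrite mxE.
by rewrite (@sum_enum R l m (fun x => wv lam x * (dss_adj x (enum_val c))%:R)) eigen_v.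
Qed.

Definition sgv (x : dss_vertex l m) : R :=
  match x with
  | inl false => -1
  | inl true => 1
  | inr (inl (_, b)) => if b then -1 else 1
  | inr (inr (_, b)) => if b then 1 else -1
  end.

Lemma wv_neg (lam : R) x : wv (- lam) x = sgv x * wv lam x.
Proof. by case: x => [[]|[[j []]|[j []]]]; rewrite /= sqrrN; ring. Qed.

Lemma sgv_neq0 x : sgv x != 0.
Proof. by case: x => [[]|[[j []]|[j []]]]; rewrite /= ?oppr_eq0 oner_eq0. Qed.

Lemma wv_neq0 (lam : R) : lam != 0 -> lam ^+ 2 != 1 -> lam ^+ 2 != l.+1%:R ->
  forall x : dss_vertex l m, wv lam x != 0.
Proof.
move=> h0 h1 h2 x.
have e1 : lam ^+ 2 - 1 != 0 by rewrite subr_eq0.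
have e2 : lam ^+ 2 - l%:R - 1 != 0.
  have -> : lam ^+ 2 - l%:R - 1 = lam ^+ 2 - l.+1%:R by rewrite -[l.+1]addn1 natrD; ring.
  by rewrite subr_eq0.
have e3 : lam ^+ 2 != 0 by rewrite expf_neq0.
by case: x => [[]|[[j []]|[j []]]]; rewrite /= ?mulf_neq0 ?expf_neq0.
Qed.

Lemma sum_gammaRe (w : 'I_N -> R) (g : R[i]) b :
  \sum_j w j * complex.Re (g * (j == b)%:R) = w b * complex.Re g.
Proof.
rewrite (bigD1 b) //= eqxx mulr1 big1 ?addr0 // => j /negbTE ->.
by rewrite mulr0 mulr0.
Qed.

Lemma sum_gammaIm (w : 'I_N -> R) (g : R[i]) b :
  \sum_j w j * complex.Im (g * (j == b)%:R) = w b * complex.Im g.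
Proof.
rewrite (bigD1 b) //= eqxx mulr1 big1 ?addr0 // => j /negbTE ->.
by rewrite mulr0 mulr0.
Qed.

Lemma sc_zero (lam tau : R) a b (gamma : R[i]) :
  pmu l m (lam ^+ 2) = 0 -> lam != 0 -> lam ^+ 2 != 1 -> lam ^+ 2 != l.+1%:R ->
  (forall c, expitA A tau c a = gamma * (c == b)%:R) ->
  cos (tau * lam) * sin (tau * lam) = 0.
Proof.
move=> hp h0 h1 h2 H.
have hp' : pmu l m ((- lam) ^+ 2) = 0 by rewrite sqrrN.
pose w := fun j : 'I_N => wv lam (enum_val j).
pose w' := fun j : 'I_N => wv (- lam) (enum_val j).
have e1 : w b * complex.Re gamma = w a * cos (tau * lam).
  rewrite -(@key_cos R N A adj_bound w lam tau a (@eigen_I lam hp)) -sum_gammaRe.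
  by apply: eq_bigr => j _; rewrite H.
have e2 : w b * complex.Im gamma = w a * sin (tau * lam).
  rewrite -(@key_sin R N A adj_bound w lam tau a (@eigen_I lam hp)) -sum_gammaIm.
  by apply: eq_bigr => j _; rewrite H.
have e3 : w' b * complex.Re gamma = w' a * cos (tau * - lam).
  rewrite -(@key_cos R N A adj_bound w' (- lam) tau a (@eigen_I (- lam) hp')) -sum_gammaRe.
  by apply: eq_bigr => j _; rewrite H.
have e4 : w' b * complex.Im gamma = w' a * sin (tau * - lam).
  rewrite -(@key_sin R N A adj_bound w' (- lam) tau a (@eigen_I (- lam) hp')) -sum_gammaIm.
  by apply: eq_bigr => j _; rewrite H.
move: e3 e4; rewrite /w' !wv_neg mulrN cosN sinN -/(w a) -/(w b).
set sa := sgv (enum_val a); set sb := sgv (enum_val b).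
set wa := w a; set wb := w b; set C := cos (tau * lam); set S := sin (tau * lam).
set g1 := complex.Re gamma; set g2 := complex.Im gamma.
move: e1 e2; rewrite -/wa -/wb -/C -/S -/g1 -/g2 => e1 e2 e3 e4.
have f1 : (sb - sa) * (wa * C) = 0.
  have -> : (sb - sa) * (wa * C) = sb * (wa * C - wb * g1) + (sb * wb * g1 - sa * wa * C) by ring.
  by rewrite e1 e3 !subrr mulr0 addr0.
have f2 : (sb + sa) * (wa * S) = 0.
  have -> : (sb + sa) * (wa * S) = sb * (wa * S - wb * g2) + (sb * wb * g2 - sa * wa * - S) by ring.
  by rewrite e2 e4 !subrr mulr0 addr0.
have : (2 * sb * wa) * (C * S) = 0.
  transitivity (S * ((sb - sa) * (wa * C)) + C * ((sb + sa) * (wa * S))); first by ring.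
  by rewrite f1 f2 !mulr0 addr0.
move/eqP; rewrite mulf_eq0 => /orP [|/eqP //].
by rewrite !mulf_eq0 pnatr_eq0 /= (negbTE (sgv_neq0 _)) (negbTE (@wv_neq0 lam h0 h1 h2 _)).
Qed.

End G.

Lemma sqr_absz (R : realType) (k : int) : (k%:~R : R) ^+ 2 = ((`|k|%N)%:R) ^+ 2.
Proof. by rewrite natr_absz intr_norm real_normK // num_real. Qed.

Lemma step_root (R : realType) l m (tau : R) a b (gamma : R[i]) :
  tau != 0 ->
  (forall c, expitA (dss_adjmx R l m) tau c a = gamma * (c == b)%:R) ->
  forall mu : R, pmu l m mu = 0 -> 0 < mu -> mu != 1 -> mu != l.+1%:R ->
  exists k : int, k != 0 /\ mu = k%:~R ^+ 2 * (pi / (tau *+ 2)) ^+ 2.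
Proof.
move=> t0 H mu pm mu0 mu1 mu2.
set lam := Num.sqrt mu.
have lam2 : lam ^+ 2 = mu by rewrite sqr_sqrtr // ltW.
have lam0 : lam != 0 by rewrite gt_eqF // sqrtr_gt0.
have := @sc_zero R l m lam tau a b gamma; rewrite lam2 => /(_ pm lam0 mu1 mu2 H) cs.
have : sin ((tau * lam) *+ 2) = 0 by rewrite sin_mulr2n cs mul0rn.
move=> /sin_zero [k hk]; exists k; split.
  apply/eqP => k0; move: hk; rewrite k0 mul0r => /eqP.
  by rewrite mulrn_eq0 /= mulf_eq0 (negbTE t0) (negbTE lam0).
have ht2 : tau *+ 2 != 0 by rewrite mulrn_eq0 /= (negbTE t0).
have -> : mu = lam ^+ 2 by [].
have -> : lam = k%:~R * pi / (tau *+ 2).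
  by rewrite -hk; field.
by rewrite -mulrA exprMn.
Qed.

Lemma ne_lt {R : realType} {x y : R} : x < y -> x != y.
Proof. by move/lt_eqF ->. Qed.
Lemma ne_gt {R : realType} {x y : R} : y < x -> x != y.
Proof. by move/gt_eqF ->. Qed.

Arguments step_root {R l m tau a b gamma}.
Arguments vieta {R l m x y z}.

Theorem theorem3p1 (R : realType) (l m : nat) :
  (0 < l)%N -> (0 < m)%N ->
  forall a b : 'I_(dss_n l m), a != b -> ~ PST (dss_adjmx R l m) a b.
Proof.
move=> l0 m0 a b ab [tau [gamma H]].
have [t0|t0] := eqVneq tau 0.
  have := @expitA0_diag R (dss_n l m) (dss_adjmx R l m) a.
  by rewrite -t0 H (negbTE ab) mulr0 /= => /esym /eqP; rewrite oner_eq0.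
have [x [y [z [[px py pz] [/andP [x0 x1] /andP [y0 y1] z0]]]]] := @roots_exist R l m l0 m0.
have l1 : 1 <= l.+1%:R :> R by rewrite ler1n.
have [k1 [k10 ex]] := step_root t0 H _ px x0 (ne_lt x1) (ne_lt (lt_le_trans x1 l1)).
have [k2 [_ ey]] := step_root t0 H _ py (lt_trans ltr01 y0) (ne_gt y0) (ne_lt y1).
have [k3 [_ ez]] := step_root t0 H _ pz (lt_trans ltr01 (le_lt_trans l1 z0))
   (ne_gt (le_lt_trans l1 z0)) (ne_gt z0).
have vi := vieta px py pz (ne_lt (lt_trans x1 y0))
   (ne_lt (lt_trans x1 (le_lt_trans l1 z0))) (ne_lt (lt_trans y1 z0)).
set rho := (pi / (tau *+ 2)) ^+ 2 in ex ey ez.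
set P := ((l + m + 3) * `|k1| ^ 2)%N.
set Q := (`|k1| ^ 2 + `|k2| ^ 2 + `|k3| ^ 2)%N.
have hQ : x * Q%:R = P%:R :> R.
  rewrite /P /Q !natrD !natrM -!expr2 -!sqr_absz.
  rewrite -[X in _ = X * _]vi ex ey ez; ring.
have Q0 : (0 < Q)%N.
  by rewrite /Q !addn_gt0 expn_gt0 absz_gt0 k10.
have P0 : (0 < P)%N.
  by rewrite -(ltr0n R) -hQ mulr_gt0 // ltr0n.
have PQ : (P < Q)%N.
  by rewrite -(ltr_nat R) -hQ gtr_pMl // ltr0n.
clearbody P Q.
apply: (@nat_noroot P Q (l + m + 3) (l * m + l + m + 3) P0 PQ).
apply/eqP; rewrite -(eqr_nat R) !natrD !natrM -hQ.
apply/eqP; apply/eqP; rewrite -subr_eq0; apply/eqP.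
transitivity ((Q%:R : R) ^+ 3 * pmu l m x); last by rewrite px mulr0.
rewrite /pmu !natrD !natrM; ring.
Qed.
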